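(* Let $(X,d)$ be a compact metric space containing infinitely many points, and let $C(X)$ be the space of continuous functions $f:X\to\mathbb{R}$ with the norm $\|f\|_\infty=\sup_{x\in X}|f(x)|$. For $f\in C(X)$ let $\omega(f,\delta)=\sup_{d(x,y)\le\delta}|f(x)-f(y)|$ and $\Omega(f)=\{\omega(f,\frac{1}{1+n})\}_{n=0}^\infty$. Then $\Omega$ satisfies Shapiro's theorem on $C(X)$: for every non-increasing sequence $\{\varepsilon_n\}$ of nonnegative reals with $\varepsilon_n\to0$ there exists $f\in C(X)$ with $\Omega(f)\in c_0$ and $\omega(f,\frac{1}{1+n})\neq\mathbf{O}(\varepsilon_n)$. *)

(* Defs.v *)
From HB Require Import structures.
From mathcomp Require Import all_boot all_order all_algebra.
From mathcomp Require Import all_classical all_reals all_analysis.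
Set Implicit Arguments. Unset Strict Implicit. Unset Printing Implicit Defensive.
Import Order.TTheory GRing.Theory Num.Theory.
Import numFieldTopology.Exports numFieldNormedType.Exports.
Local Open Scope classical_set_scope.
Local Open Scope ring_scope.

Definition modcont {R : realType} {X : metricType R} (f : X -> R) (delta : R) : R :=
  sup [set r : R | exists x y : X, mdist x y <= delta /\ r = `|f x - f y|].

(* Main.v *)
Require Import Defs.
From HB Require Import structures.
From mathcomp Require Import all_boot all_order all_algebra.
From mathcomp Require Import all_classical all_reals all_analysis.
From mathcomp Require Import lra.
Import Order.TTheory GRing.Theory Num.Theory.
Import numFieldTopology.Exports numFieldNormedType.Exports.
Local Open Scope classical_set_scope.
Local Open Scope ring_scope.

Section Cons.
Variables (R : realType) (X : metricType R) (a : X) (s : nat -> R) (xs : nat -> X).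
Hypothesis s_gt0 : forall n, 0 < s n.
Hypothesis s_noninc : forall m n, (m <= n)%N -> s n <= s m.
Hypothesis xs_neq : forall n, xs n != a.

Let K n := s n / mdist a (xs n).
Let h n x := Num.min (s n) (K n * mdist a x).
Definition ff x := sup (range (fun n => h n x)).

Let K_ge0 n : 0 <= K n.
Proof. by rewrite /K divr_ge0 ?mdist_ge0 // ltW. Qed.

Let h_ge0 n x : 0 <= h n x.
Proof. by rewrite /h le_min ltW //= mulr_ge0 ?mdist_ge0. Qed.

Let h_le n x : h n x <= s 0.
Proof. by rewrite /h ge_min (s_noninc _ _ (leq0n n)). Qed.

Let hub x : has_ubound (range (fun n => h n x)).
Proof. by exists (s 0) => _ [n _ <-]; exact: h_le. Qed.

Let h_le_ff n x : h n x <= ff x.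
Proof. by apply: ub_le_sup (hub x) _ _; exists n. Qed.

Let ff_ge0 x : 0 <= ff x.
Proof. exact: le_trans (h_ge0 0 x) (h_le_ff 0 x). Qed.

Let ff_le x : ff x <= s 0.
Proof. by apply: ge_sup; [exists (h 0 x); exists 0%N | move=> _ [n _ <-]; exact: h_le]. Qed.

Lemma ff_a : ff a = 0.
Proof.
apply/eqP; rewrite eq_le ff_ge0 andbT; apply: ge_sup.
  by exists (h 0 a); exists 0%N.
by move=> _ [n _ <-]; rewrite /h mdistxx mulr0 ge_min lexx orbT.
Qed.

Lemma ff_xs n : s n <= ff (xs n).
Proof.
apply: le_trans (h_le_ff n _); rewrite /h /K divfK ?minxx //.
by rewrite gt_eqF // mdist_gt0 eq_sym.
Qed.

Let h_lip n x y : h n x <= h n y + K n * mdist x y.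
Proof.
have tri : mdist a x <= mdist a y + mdist y x by apply: metric_triangle.
rewrite /h -lerBlDr le_min; apply/andP; split.
  rewrite lerBlDr ge_min; apply/orP; left.
  by rewrite lerDl mulr_ge0 ?mdist_ge0.
rewrite lerBlDr ge_min; apply/orP; right.
by rewrite -mulrDr ler_wpM2l // [mdist x y]metric_sym.
Qed.

Let Kbound N : exists L, 0 <= L /\ forall n, (n < N)%N -> K n <= L.
Proof.
elim: N => [|N [L [L0 HL]]]; first by exists 0.
exists (L + K N); split; first by rewrite addr_ge0.
move=> n; rewrite ltnS leq_eqVlt => /orP [/eqP ->|/HL hn].
  by rewrite lerDr.
by rewrite (le_trans hn) // lerDl.
Qed.

Lemma ff_key e : 0 < e -> (exists N, s N <= e) ->
  exists L, 0 <= L /\ forall x y, `|ff x - ff y| <= e + L * mdist x y.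
Proof.
move=> e0 [N sN]; have [L [L0 HL]] := Kbound N.
have one x y : ff x <= ff y + e + L * mdist x y.
  apply: ge_sup; first by exists (h 0 x); exists 0%N.
  move=> _ [n _ <-]; case: (ltnP n N) => nN.
    apply: le_trans (h_lip n x y) _.
    have : K n * mdist x y <= L * mdist x y by rewrite ler_wpM2r ?mdist_ge0 ?HL.
    have := h_le_ff n y; lra.
  have : h n x <= s n by rewrite /h ge_min lexx.
  have := s_noninc _ _ nN; have := ff_ge0 y.
  have : 0 <= L * mdist x y by rewrite mulr_ge0 ?mdist_ge0.
  lra.
exists L; split => // x y; rewrite ler_norml; apply/andP; split.
  by have := one y x; rewrite metric_sym; lra.
by have := one x y; lra.
Qed.

Hypothesis s_small : forall e, 0 < e -> exists N, s N <= e.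

Lemma ff_cont : continuous ff.
Proof.
move=> x; apply/cvgrPdist_le => e e0.
have e20 : 0 < e / 2 by rewrite divr_gt0.
have [L [L0 HL]] := @ff_key (e / 2) e20 (@s_small (e / 2) e20).
apply/nbhs_ballP; exists ((e / 2) / (L + 1)).
  by rewrite /= divr_gt0 // ltr_wpDl.
move=> y; rewrite /= ballEmdist /= => xy.
apply: le_trans (HL x y) _.
have L1 : 0 < L + 1 by rewrite ltr_wpDl.
have : (L + 1) * mdist x y < e / 2.
  by rewrite mulrC -ltr_pdivlMr.
have := mdist_ge0 x y; nra.
Qed.

Lemma modcont_ub e : 0 < e -> exists L, 0 <= L /\ forall d, 0 <= d ->
  modcont ff d <= e + L * d.
Proof.
move=> e0; have [L [L0 HL]] := @ff_key e e0 (@s_small e e0).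
exists L; split => // d d0; apply: ge_sup.
  by exists `|ff a - ff a|; exists a, a; rewrite mdistxx.
move=> _ [x [y [xy ->]]]; apply: le_trans (HL x y) _.
by rewrite lerD2l ler_wpM2l.
Qed.

Lemma modcont_lb x y d : mdist x y <= d -> `|ff x - ff y| <= modcont ff d.
Proof.
move=> xy; apply: ub_le_sup; last by exists x, y.
exists (s 0) => _ [u [v [_ ->]]]; rewrite ler_norml.
have := ff_le u; have := ff_le v; have := ff_ge0 u; have := ff_ge0 v.
move=> *; apply/andP; split; lra.
Qed.

End Cons.
Lemma accum (R : realType) (X : metricType R)
  (hcompact : compact [set: X]) (hinf : infinite_set [set: X]) :
  exists a : X, forall r : R, 0 < r -> exists x, x != a /\ mdist a x < r.
Proof.
pose F := fun B : set X => finite_set (~` B).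
have FF : ProperFilter F.
  have Fi : Filter F.
    split.
    - by rewrite /F setCT; exact: finite_set0.
    - by move=> A B; rewrite /F cofinite_setI.
    - by move=> A B AB; apply: sub_cofinite_set.
  by split => //; rewrite /F setC0.
have [p [_ clp]] := hcompact F FF (cofinite_setT _).
exists p => r r0.
have Fp : F [set~ p] by rewrite /F setCK; apply: finite_set1.
have [y [/= yp pyr]] := clp _ _ Fp (nbhsx_ballx p r r0).
by exists y; split; [apply/eqP | move: pyr; rewrite ballEmdist].
Qed.

Theorem mainTheorem8 (R : realType) (X : metricType R)
  (hcompact : compact [set: X]) (hinf : infinite_set [set: X])
  (eps : nat -> R)
  (eps_ge0 : forall n, 0 <= eps n)
  (eps_noninc : forall n, eps n.+1 <= eps n)
  (eps_cvg0 : eps @ \oo --> 0) :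
  exists f : X -> R,
    continuous f /\
    (fun n : nat => modcont f (n.+1%:R^-1)) @ \oo --> 0 /\
    ~ (exists C : R, \forall n \near \oo, modcont f (n.+1%:R^-1) <= C * eps n).
Proof.
have [a acc] := @accum R X hcompact hinf.
have acc' n : exists x, x != a /\ mdist a x < n.+1%:R^-1 by apply: acc.
pose xs n := projT1 (cid (acc' n)).
have xsP n : xs n != a /\ mdist a (xs n) < n.+1%:R^-1 := projT2 (cid (acc' n)).
pose u n := eps n + n.+1%:R^-1.
pose s n := Num.sqrt (u n).
have u_gt0 n : 0 < u n by rewrite /u ltr_wpDl.
have s_gt0 n : 0 < s n by rewrite sqrtr_gt0.
have eps_mono m n : (m <= n)%N -> eps n <= eps m.
  move=> /subnK <-; elim: (n - m)%N => [|k IH]; first by rewrite add0n.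
  by rewrite addSn (le_trans (eps_noninc _)).
have s_noninc m n : (m <= n)%N -> s n <= s m.
  move=> mn; rewrite ler_sqrt; last exact: ltW.
  rewrite /u lerD ?eps_mono //.
  by rewrite lef_pV2 ?posrE // ler_nat ltnS.
have ucvg : u @ \oo --> 0.
  rewrite -[0]addr0; apply: cvgD => //; exact: cvg_harmonic.
have u_small e : 0 < e -> \forall n \near \oo, u n < e.
  move=> e0; move/cvgrPdist_lt: ucvg => /(_ e e0); apply: filterS => n.
  by rewrite sub0r normrN gtr0_norm.
have s_small e : 0 < e -> exists N, s N <= e.
  move=> e0; have [N uN] := filter_ex (u_small (e ^+ 2) (exprn_gt0 2 e0)).
  exists N; rewrite -(ger0_norm (ltW e0)) -sqrtr_sqr ler_sqrt ?ltW //.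
  by rewrite exprn_gt0.
have xs_neq n := (xsP n).1.
exists (@ff R X a s xs); split; first exact: (@ff_cont R X a s xs s_gt0 s_noninc s_small).
split.
  apply/cvgrPdist_le => e e0.
  have e20 : 0 < e / 2 by rewrite divr_gt0.
  have [L [L0 HL]] := @modcont_ub R X a s xs s_gt0 s_noninc s_small (e/2) e20.
  have L1 : 0 < L + 1 by rewrite ltr_wpDl.
  move/cvgrPdist_le: (@cvg_harmonic R) => /(_ ((e / 2) / (L + 1))).
  rewrite divr_gt0 // => /(_ isT); apply: filterS => n /=.
  rewrite sub0r normrN ger0_norm // => hn.
  have m0 : 0 <= modcont (@ff R X a s xs) n.+1%:R^-1.
    apply: le_trans (@modcont_lb R X a s xs s_gt0 s_noninc a a _ _).
      exact: normr_ge0.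
    by rewrite mdistxx.
  rewrite sub0r normrN ger0_norm //.
  apply: le_trans (HL _ _) _; first by [].
  have : (L + 1) * n.+1%:R^-1 <= e / 2 by rewrite mulrC -ler_pdivlMr.
  have : 0 <= n.+1%:R^-1 :> R by [].
  move: (n.+1%:R^-1) => d d0 hd.
  rewrite mulrDl mul1r in hd; lra.
move=> [C HC].
have C0 : 0 < 1 + C ^+ 2 by rewrite ltr_wpDr ?sqr_ge0.
have Ci : 0 < (1 + C ^+ 2)^-1 by rewrite invr_gt0.
have [n [hn un]] := filter_ex (filterI HC (u_small _ Ci)).
have h1 : s n <= C * eps n.
  apply: le_trans hn; apply: le_trans (@ff_xs R X a s xs s_noninc xs_neq n) _.
  have := @modcont_lb R X a s xs s_gt0 s_noninc (xs n) a n.+1%:R^-1.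
  rewrite (@ff_a R X a s xs s_gt0 s_noninc) subr0 ger0_norm; last first.
    by apply: le_trans (@ff_xs R X a s xs s_noninc xs_neq n); exact: ltW.
  by apply; rewrite metric_sym ltW // (xsP n).2.
have su : s n ^+ 2 = u n by rewrite sqr_sqrtr // ltW.
have eu : eps n <= u n by rewrite /u lerDl.
have e0 := eps_ge0 n.
have sn := s_gt0 n.
have {}un : u n * (1 + C ^+ 2) < 1 by rewrite -ltr_pdivlMr // div1r.
have Cp : 0 < C.
  rewrite ltNge; apply/negP => Cle.
  have : C * eps n <= 0 by rewrite mulr_le0_ge0.
  lra.
have h2 : s n <= C * s n ^+ 2.
  rewrite su; apply: le_trans h1 _; rewrite ler_wpM2l //; exact: ltW.
have h3 : 1 <= C * s n.
  by rewrite -(ler_pM2r sn) mul1r -mulrA -expr2.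
have : 1 <= (C * s n) ^+ 2.
  by rewrite expr2; apply: le_trans (h3) _; rewrite ler_peMr // (le_trans _ h3).
rewrite exprMn su.
move: un; rewrite mulrDr mulr1.
nra.
Qed.
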